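(* Let $f$ and $g$ be germs at $0\in\mathbb{C}$ of holomorphic functions of one variable with $v(f)\geq 3$ and $v(g)\geq 2$, and let $I=\big(f(z_1)-z_2z_3,\,g(z_2)\big)\subset\mathcal{O}_3$. Then $\mathbf{T}_2(I)\leq\max\{v(f),v(g)\}$ and $\beta_2(I)=\max\{v(f),\,v(g)(v(f)-1)\}=v(g)(v(f)-1)$.
   Context: $\mathcal{O}_n$ denotes the local ring of germs at $0\in\mathbb{C}^n$ of holomorphic functions. $\Gamma$ denotes the set of non-constant germs of holomorphic maps $z\colon(\mathbb{C},0)\to(\mathbb{C}^n,0)$; $v(z)$ is the order of vanishing of $z$ at $0$; for a one-variable germ $h$, $v(h)$ is its order of vanishing at $0$ ($v(0)=\infty$). For an ideal $I\subset\mathcal{O}_n$, $\mathbf{T}_1(I)=\sup_{z\in\Gamma}\inf_{h\in I}\frac{v(h\circ z)}{v(z)}$, and $\mathbf{T}_q(I)=\inf_{\{w_1,\dots,w_{q-1}\}}\mathbf{T}_1(I,w_1,\dots,w_{q-1})$ over all linear functions $w_j$, where $(I,w_1,\dots,w_{q-1})$ is the ideal generated by $I$ and the $w_j$. The generic value $\beta_q(I)$ is the unique $\beta\in\mathbb{R}\cup\{\infty\}$ such that there is a non-empty Zariski open subset $W$ of the Grassmannian $G^{n-q+1}$ of $(n-q+1)$-dimensional linear subspaces of $\mathbb{C}^n$ with $\mathbf{T}_1(I,w_1,\dots,w_{q-1})=\beta$ whenever $\{w_1=\dots=w_{q-1}=0\}\in W$. *)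

(* Defs.v *)
From Stdlib Require Import Reals ClassicalEpsilon List.
Import ListNotations.
Open Scope R_scope.

Definition C := (R * R)%type.
Definition C0 : C := (0, 0).
Definition C1 : C := (1, 0).
Definition Cadd (x y : C) : C := (fst x + fst y, snd x + snd y).
Definition Copp (x : C) : C := (- fst x, - snd x).
Definition Csub (x y : C) : C := Cadd x (Copp y).
Definition Cmul (x y : C) : C :=
  (fst x * fst y - snd x * snd y, fst x * snd y + snd x * fst y).
Definition Cnorm (x : C) : R := sqrt (fst x ^ 2 + snd x ^ 2).

Fixpoint csum (n : nat) (f : nat -> C) : C :=
  match n with O => C0 | S m => Cadd (csum m f) (f m) end.

Inductive ER := Fin (r : R) | PInf.
Definition ERle (x y : ER) : Prop :=
  match x, y with
  | Fin a, Fin b => a <= b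
  | _, PInf => True
  | PInf, Fin _ => False
  end.
Definition is_lub (S : ER -> Prop) (t : ER) : Prop :=
  (forall s, S s -> ERle s t) /\ (forall u, (forall s, S s -> ERle s u) -> ERle t u).
Definition is_glb (S : ER -> Prop) (t : ER) : Prop :=
  (forall s, S s -> ERle t s) /\ (forall u, (forall s, S s -> ERle u s) -> ERle u t).
Definition ER_sup (S : ER -> Prop) : ER := epsilon (inhabits PInf) (is_lub S).
Definition ER_inf (S : ER -> Prop) : ER := epsilon (inhabits PInf) (is_glb S).
Definition ERmin (x y : ER) : ER :=
  match x, y with
  | Fin a, Fin b => Fin (Rmin a b)
  | Fin a, PInf => Fin a
  | PInf, y => y
  end.
(* x / y, used only with y a finite positive integer (v(z) >= 1) *)
Definition ERdiv (x y : ER) : ER :=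
  match x, y with
  | Fin a, Fin b => Fin (a / b)
  | PInf, _ => PInf
  | Fin _, PInf => Fin 0
  end.

Definition ps1 := nat -> C.
Definition ps3 := nat -> nat -> nat -> C.

(* convergence = germ of holomorphic function at 0 *)
Definition conv1 (a : ps1) : Prop :=
  exists M r, 0 < r /\ forall k, Cnorm (a k) * r ^ k <= M.
Definition conv3 (c : ps3) : Prop :=
  exists M r, 0 < r /\ forall i j l, Cnorm (c i j l) * r ^ (i + j + l) <= M.

Definition vord (a : ps1) : ER :=
  epsilon (inhabits PInf) (fun t =>
    (t = PInf /\ forall k, a k = C0) \/
    (exists k, t = Fin (INR k) /\ a k <> C0 /\ forall j, (j < k)%nat -> a j = C0)).

Definition one1 : ps1 := fun k => if Nat.eqb k 0 then C1 else C0.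
Definition mul1 (a b : ps1) : ps1 :=
  fun k => csum (S k) (fun i => Cmul (a i) (b (k - i)%nat)).
Definition pow1 (a : ps1) (m : nat) : ps1 := Nat.iter m (mul1 a) one1.

Definition mul3 (a b : ps3) : ps3 :=
  fun i j l => csum (S i) (fun p => csum (S j) (fun q => csum (S l) (fun s =>
    Cmul (a p q s) (b (i - p)%nat (j - q)%nat (l - s)%nat)))).

(* h o z for z = (z1,z2,z3) with z_i(0) = 0 (then only finitely many
   monomials contribute to each coefficient) *)
Definition comp (h : ps3) (z1 z2 z3 : ps1) : ps1 :=
  fun k => csum (S k) (fun i => csum (S k) (fun j => csum (S k) (fun l =>
    Cmul (h i j l) (mul1 (mul1 (pow1 z1 i) (pow1 z2 j)) (pow1 z3 l) k)))).

Definition in_Gamma (z1 z2 z3 : ps1) : Prop :=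
  conv1 z1 /\ conv1 z2 /\ conv1 z3 /\
  z1 0%nat = C0 /\ z2 0%nat = C0 /\ z3 0%nat = C0 /\
  exists k, z1 k <> C0 \/ z2 k <> C0 \/ z3 k <> C0.

Definition vcurve (z1 z2 z3 : ps1) : ER := ERmin (vord z1) (ERmin (vord z2) (vord z3)).

Fixpoint lincomb (cs gs : list ps3) : ps3 :=
  match cs, gs with
  | c :: cs', g :: gs' => fun i j l => Cadd (mul3 c g i j l) (lincomb cs' gs' i j l)
  | _, _ => fun _ _ _ => C0
  end.
Definition in_ideal (gs : list ps3) (h : ps3) : Prop :=
  exists cs, length cs = length gs /\ Forall conv3 cs /\
    forall i j l, h i j l = lincomb cs gs i j l.

Definition T1 (gs : list ps3) : ER :=
  ER_sup (fun t => exists z1 z2 z3, in_Gamma z1 z2 z3 /\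
    t = ER_inf (fun s => exists h, in_ideal gs h /\
          s = ERdiv (vord (comp h z1 z2 z3)) (vcurve z1 z2 z3))).

Definition C3 := (C * C * C)%type.
Definition lin (a : C3) : ps3 :=
  fun i j l =>
    match i, j, l with
    | 1%nat, 0%nat, 0%nat => fst (fst a)
    | 0%nat, 1%nat, 0%nat => snd (fst a)
    | 0%nat, 0%nat, 1%nat => snd a
    | _, _, _ => C0
    end.

Definition Tq (q : nat) (gs : list ps3) : ER :=
  ER_inf (fun t => exists ws : list C3, length ws = (q - 1)%nat /\
    t = T1 (gs ++ map lin ws)).

(* ---------- generic value beta_2 for n = 3 ----------
   G^{n-q+1} = G^2(C^3): the plane {w = 0} with w = a.z, a <> 0, is identified
   with [a] in the dual projective plane P^2; Zariski open subsets are the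
   complements of common zero loci of finitely many homogeneous polynomials. *)
Definition poly3 := list (C * (nat * nat * nat)).
Definition Cpow (x : C) (n : nat) : C := Nat.iter n (Cmul x) C1.
Definition peval (P : poly3) (a : C3) : C :=
  fold_right (fun m acc =>
    let '(c, (i, j, l)) := m in
    Cadd (Cmul c (Cmul (Cpow (fst (fst a)) i)
                   (Cmul (Cpow (snd (fst a)) j) (Cpow (snd a) l)))) acc) C0 P.
Definition homogeneous (P : poly3) : Prop :=
  exists d, Forall (fun m : C * (nat * nat * nat) =>
    let '(_, (i, j, l)) := m in (i + j + l)%nat = d) P.
Definition C3zero : C3 := (C0, C0, C0).
Definition in_zopen (Ps : list poly3) (a : C3) : Prop :=
  exists P, In P Ps /\ peval P a <> C0.

Definition generic_value2 (gs : list ps3) (b : ER) : Prop :=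
  exists Ps : list poly3, Forall homogeneous Ps /\
    (exists a, a <> C3zero /\ in_zopen Ps a) /\
    forall a, a <> C3zero -> in_zopen Ps a -> T1 (gs ++ [lin a]) = b.

Definition beta2 (gs : list ps3) : ER := epsilon (inhabits PInf) (generic_value2 gs).

Definition gen_f (f : ps1) : ps3 :=
  fun i j l => Csub (if andb (Nat.eqb j 0) (Nat.eqb l 0) then f i else C0)
                    (if andb (Nat.eqb i 0) (andb (Nat.eqb j 1) (Nat.eqb l 1)) then C1 else C0).
Definition gen_g (g : ps1) : ps3 :=
  fun i j l => if andb (Nat.eqb i 0) (Nat.eqb l 0) then g j else C0.

(* Main.v *)
Require Import Defs.
From Stdlib Require Import Reals List Lia Lra ClassicalEpsilon Classical FunctionalExtensionality Setoid Morphisms.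
Import ListNotations.
Require Import Defs.
Open Scope R_scope.

Lemma C_eq (x y : C) : fst x = fst y -> snd x = snd y -> x = y.
Proof. destruct x, y; simpl; intros; subst; reflexivity. Qed.

Lemma Cring : ring_theory C0 C1 Cadd Cmul Csub Copp (@eq C).
Proof.
  constructor; intros; repeat match goal with x : C |- _ => destruct x end;
  unfold Cadd, Cmul, Csub, Copp, C0, C1; simpl; apply C_eq; simpl; ring.
Qed.
Add Ring Cring : Cring.

Lemma Cmul_nz (x y : C) : x <> C0 -> y <> C0 -> Cmul x y <> C0.
Proof.
  destruct x as [a b], y as [c d]; unfold Cmul, C0; simpl; intros Hx Hy H.
  injection H; intros H2 H1.
  assert (E : (a*a+b*b)*(c*c+d*d) = 0) by nra.
  apply Rmult_integral in E; destruct E as [E|E].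
  - apply Hx; f_equal; nra.
  - apply Hy; f_equal; nra.
Qed.

Definition Cinv (x : C) : C :=
  (fst x / (fst x ^ 2 + snd x ^ 2), - snd x / (fst x ^ 2 + snd x ^ 2)).
Lemma Cinv_r (x : C) : x <> C0 -> Cmul x (Cinv x) = C1.
Proof.
  destruct x as [a b]; unfold Cmul, Cinv, C0, C1; simpl; intro H.
  assert (a*(a*1)+b*(b*1) <> 0).
  { intro E. apply H. f_equal; nra. }
  apply C_eq; simpl; field; simpl in *; lra || auto.
Qed.

Lemma Cpow_nz x n : x <> C0 -> Cpow x n <> C0.
Proof. intro H; induction n; simpl. unfold C1, C0; intro E; injection E; lra.
  apply Cmul_nz; auto. Qed.

Lemma csum_ext n F G : (forall i, (i < n)%nat -> F i = G i) -> csum n F = csum n G.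
Proof. induction n; simpl; intros; auto. rewrite IHn, H; auto. Qed.

#[global] Instance csum_proper n : Proper (pointwise_relation nat eq ==> eq) (csum n).
Proof. intros F G H. apply csum_ext; auto. Qed.

Lemma csum_zero n F : (forall i, (i < n)%nat -> F i = C0) -> csum n F = C0.
Proof. induction n; simpl; intros; auto. rewrite IHn, H; auto. ring. Qed.

Lemma csum_add n F G : csum n (fun i => Cadd (F i) (G i)) = Cadd (csum n F) (csum n G).
Proof. induction n; simpl. ring. rewrite IHn; ring. Qed.

Lemma csum_opp n F : csum n (fun i => Copp (F i)) = Copp (csum n F).
Proof. induction n; simpl. ring. rewrite IHn; ring. Qed.

Lemma csum_sub n F G : csum n (fun i => Csub (F i) (G i)) = Csub (csum n F) (csum n G).
Proof. unfold Csub. rewrite csum_add, csum_opp. auto. Qed.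

Lemma csum_mul_l n F x : Cmul x (csum n F) = csum n (fun i => Cmul x (F i)).
Proof. induction n; simpl. ring. rewrite <- IHn; ring. Qed.

Lemma csum_mul_r n F x : Cmul (csum n F) x = csum n (fun i => Cmul (F i) x).
Proof. induction n; simpl. ring. rewrite <- IHn; ring. Qed.

Lemma csum_single n m F : (m < n)%nat -> (forall i, (i < n)%nat -> i <> m -> F i = C0) ->
  csum n F = F m.
Proof.
  induction n; intros Hm H; simpl. lia.
  destruct (Nat.eq_dec m n).
  - subst. rewrite csum_zero. ring. intros; apply H; lia.
  - rewrite IHn by (auto; lia). rewrite (H n) by lia. ring.
Qed.

Lemma csum_extend n K F : (n <= K)%nat -> (forall i, (n <= i < K)%nat -> F i = C0) ->
  csum K F = csum n F.
Proof.
  intros HK; induction HK; intros H; auto.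
  simpl. rewrite IHHK by (intros; apply H; lia). rewrite (H m) by lia. ring.
Qed.

Lemma csum_swap n m F : csum n (fun i => csum m (fun j => F i j)) =
  csum m (fun j => csum n (fun i => F i j)).
Proof.
  induction n; simpl. symmetry; apply csum_zero; auto.
  rewrite IHn, <- csum_add. reflexivity.
Qed.

Lemma csum_S_l n F : csum (S n) F = Cadd (F O) (csum n (fun i => F (S i))).
Proof. induction n. simpl. ring. change (csum (S (S n)) F) with (Cadd (csum (S n) F) (F (S n))).
  rewrite IHn. simpl. ring. Qed.

Lemma csum_rev n F : csum (S n) F = csum (S n) (fun i => F (n - i)%nat).
Proof.
  induction n. simpl. reflexivity.
  rewrite (csum_S_l (S n) (fun i => F (S n - i)%nat)).
  change (csum (S (S n)) F) with (Cadd (csum (S n) F) (F (S n))).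
  rewrite IHn. replace (S n - 0)%nat with (S n) by lia.
  rewrite (Radd_comm Cring). f_equal.
Qed.

Lemma triangle K G : csum K (fun u => csum (S u) (fun v => G v u)) =
  csum K (fun v => csum (K - v) (fun w => G v (v + w)%nat)).
Proof.
  induction K. reflexivity.
  change (csum (S K) ?F) with (Cadd (csum K F) (F K)). rewrite IHK.
  rewrite (csum_ext K (fun v => csum (S K - v) (fun w => G v (v + w)%nat))
     (fun v => Cadd (csum (K - v) (fun w => G v (v + w)%nat)) (G v K))).
  2:{ intros i Hi.
      replace (S K - i)%nat with (S (K - i)) by lia. simpl. do 2 f_equal. lia. }
  rewrite csum_add. replace (S K - K)%nat with 1%nat by lia.
  simpl. rewrite Nat.add_0_r. ring.
Qed.

Lemma tri K X : (forall p q, (K <= p + q)%nat -> X p q = C0) ->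
  csum K (fun r => csum (S r) (fun p => X p (r - p)%nat)) =
  csum K (fun p => csum K (fun q => X p q)).
Proof.
  intros H. rewrite (triangle K (fun v u => X v (u - v)%nat)).
  apply csum_ext; intros p Hp.
  rewrite (csum_extend (K - p) K (fun q => X p q)) by (lia || (intros; apply H; lia)).
  apply csum_ext; intros. f_equal; lia.
Qed.
Lemma mul1_one_r a : mul1 a one1 = a.
Proof.
  apply functional_extensionality; intro k; unfold mul1.
  rewrite (csum_single (S k) k) by (lia || (intros i Hi Hne; unfold one1;
    destruct (Nat.eqb (k - i) 0) eqn:E; [apply Nat.eqb_eq in E; lia | ring])).
  rewrite Nat.sub_diag. unfold one1; simpl. ring.
Qed.

Lemma mul1_comm a b : mul1 a b = mul1 b a.
Proof.
  apply functional_extensionality; intro k; unfold mul1.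
  rewrite csum_rev. apply csum_ext; intros i Hi.
  replace (k - (k - i))%nat with i by lia. ring.
Qed.

Lemma mul1_one_l a : mul1 one1 a = a.
Proof. rewrite mul1_comm; apply mul1_one_r. Qed.

Lemma mul1_assoc a b c : mul1 (mul1 a b) c = mul1 a (mul1 b c).
Proof.
  apply functional_extensionality; intro k; unfold mul1.
  rewrite (csum_ext (S k) _ (fun u => csum (S u) (fun v => Cmul (Cmul (a v) (b (u - v)%nat)) (c (k - u)%nat))))
    by (intros; apply csum_mul_r).
  rewrite (triangle (S k) (fun v u => Cmul (Cmul (a v) (b (u - v)%nat)) (c (k - u)%nat))).
  apply csum_ext; intros v Hv. rewrite csum_mul_l.
  replace (S k - v)%nat with (S (k - v)) by lia.
  apply csum_ext; intros w Hw. replace (v + w - v)%nat with w by lia.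
  replace (k - (v + w))%nat with (k - v - w)%nat by lia. ring.
Qed.

Lemma mul1_lcomm x y z : mul1 x (mul1 y z) = mul1 y (mul1 x z).
Proof. rewrite <- !mul1_assoc, (mul1_comm x y). auto. Qed.

Lemma mul1_add_r a b c : mul1 a (fun k => Cadd (b k) (c k)) = fun k => Cadd (mul1 a b k) (mul1 a c k).
Proof.
  apply functional_extensionality; intro k; unfold mul1. rewrite <- csum_add.
  apply csum_ext; intros; ring.
Qed.

Lemma pow1_S a n : pow1 a (S n) = mul1 a (pow1 a n).
Proof. reflexivity. Qed.

Lemma pow1_add a m n : pow1 a (m + n) = mul1 (pow1 a m) (pow1 a n).
Proof.
  induction m. simpl. rewrite mul1_one_l. auto.
  simpl plus. rewrite !pow1_S, IHm, mul1_assoc. auto.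
Qed.

Lemma pow1_1 a : pow1 a 1 = a.
Proof. rewrite pow1_S. simpl. apply mul1_one_r. Qed.

Lemma mul_low a b m n : (forall j, (j < m)%nat -> a j = C0) -> (forall j, (j < n)%nat -> b j = C0) ->
  (forall k, (k < m + n)%nat -> mul1 a b k = C0) /\ mul1 a b (m + n)%nat = Cmul (a m) (b n).
Proof.
  intros Ha Hb. split.
  - intros k Hk; unfold mul1. apply csum_zero; intros i Hi.
    destruct (Nat.lt_ge_cases i m). rewrite Ha by auto; ring. rewrite Hb by lia; ring.
  - unfold mul1. rewrite (csum_single _ m). f_equal; f_equal; lia. lia.
    intros i Hi Hne. destruct (Nat.lt_ge_cases i m). rewrite Ha by auto; ring. rewrite Hb by lia; ring.
Qed.

Lemma pow_low z o : (forall j, (j < o)%nat -> z j = C0) -> forall i,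
  (forall k, (k < i * o)%nat -> pow1 z i k = C0) /\ pow1 z i (i * o)%nat = Cpow (z o) i.
Proof.
  intros Hz i; induction i.
  - split. intros; simpl in *; lia. reflexivity.
  - destruct IHi as [H1 H2]. rewrite pow1_S.
    destruct (mul_low z (pow1 z i) o (i * o) Hz H1) as [L1 L2].
    split. intros k Hk; apply L1; simpl in Hk; lia.
    replace (S i * o)%nat with (o + i * o)%nat by (simpl; lia). rewrite L2, H2. reflexivity.
Qed.

Definition M3 (z1 z2 z3 : ps1) i j l := mul1 (mul1 (pow1 z1 i) (pow1 z2 j)) (pow1 z3 l).

Lemma M3_mul z1 z2 z3 i j l i' j' l' :
  mul1 (M3 z1 z2 z3 i j l) (M3 z1 z2 z3 i' j' l') = M3 z1 z2 z3 (i + i') (j + j') (l + l').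
Proof.
  unfold M3. rewrite !pow1_add.
  set (A := pow1 z1 i). set (A' := pow1 z1 i'). set (B := pow1 z2 j). set (B' := pow1 z2 j').
  set (D := pow1 z3 l). set (D' := pow1 z3 l').
  rewrite !mul1_assoc. f_equal.
  rewrite (mul1_lcomm D A'), (mul1_lcomm B A'), (mul1_lcomm D B'). reflexivity.
Qed.

Lemma M3_van z1 z2 z3 i j l k : z1 O = C0 -> z2 O = C0 -> z3 O = C0 ->
  (k < i + j + l)%nat -> M3 z1 z2 z3 i j l k = C0.
Proof.
  intros H1 H2 H3 Hk. unfold M3.
  assert (P : forall z, z O = C0 -> forall i k, (k < i)%nat -> pow1 z i k = C0).
  { intros z Hz i0 k0 Hk0. destruct (pow_low z 1 (fun j Hj => ltac:(replace j with O by lia; exact Hz)) i0) as [A _].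
    apply A; lia. }
  destruct (mul_low (pow1 z1 i) (pow1 z2 j) i j (P z1 H1 i) (P z2 H2 j)) as [A _].
  destruct (mul_low _ (pow1 z3 l) (i + j) l A (P z3 H3 l)) as [B _]. apply B; lia.
Qed.
Definition tsum3 K (F : nat -> nat -> nat -> C) :=
  csum K (fun i => csum K (fun j => csum K (fun l => F i j l))).

Definition van0 (z1 z2 z3 : ps1) := z1 O = C0 /\ z2 O = C0 /\ z3 O = C0.

Lemma tsum3_cut K k F : (S k <= K)%nat -> (forall i j l, (k < i + j + l)%nat -> F i j l = C0) ->
  tsum3 K F = tsum3 (S k) F.
Proof.
  intros HK HF. unfold tsum3.
  rewrite (csum_extend (S k) K) by (lia || (intros i Hi; apply csum_zero; intros j Hj;
     apply csum_zero; intros l Hl; apply HF; lia)).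
  apply csum_ext; intros i Hi.
  rewrite (csum_extend (S k) K) by (lia || (intros j Hj; apply csum_zero; intros l Hl; apply HF; lia)).
  apply csum_ext; intros j Hj.
  apply csum_extend. lia. intros l Hl; apply HF; lia.
Qed.

Lemma comp_big h z1 z2 z3 k K : van0 z1 z2 z3 -> (S k <= K)%nat ->
  comp h z1 z2 z3 k = tsum3 K (fun i j l => Cmul (h i j l) (M3 z1 z2 z3 i j l k)).
Proof.
  intros [H1 [H2 H3]] HK. rewrite (tsum3_cut K k) by (auto; intros; rewrite M3_van by auto; ring).
  reflexivity.
Qed.

Lemma tsum3_ext K F G : (forall i j l, F i j l = G i j l) -> tsum3 K F = tsum3 K G.
Proof. intros; unfold tsum3; apply csum_ext; intros; apply csum_ext; intros; apply csum_ext; intros; auto. Qed.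

Lemma tsum3_mul K A B : Cmul (tsum3 K A) (tsum3 K B) =
  tsum3 K (fun i j l => tsum3 K (fun i' j' l' => Cmul (A i j l) (B i' j' l'))).
Proof.
  unfold tsum3. rewrite csum_mul_r. apply csum_ext; intros i _.
  rewrite csum_mul_r. apply csum_ext; intros j _.
  rewrite csum_mul_r. apply csum_ext; intros l _.
  rewrite csum_mul_l. apply csum_ext; intros i' _.
  rewrite csum_mul_l. apply csum_ext; intros j' _.
  rewrite csum_mul_l. apply csum_ext; intros l' _. reflexivity.
Qed.

Lemma csum_tsum3 n K F : csum n (fun u => tsum3 K (fun i j l => F u i j l)) =
  tsum3 K (fun i j l => csum n (fun u => F u i j l)).
Proof.
  unfold tsum3. rewrite csum_swap. apply csum_ext; intros i _.
  rewrite csum_swap. apply csum_ext; intros j _.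
  rewrite csum_swap. reflexivity.
Qed.

Lemma comp_mul a b z1 z2 z3 k : van0 z1 z2 z3 ->
  comp (mul3 a b) z1 z2 z3 k = mul1 (comp a z1 z2 z3) (comp b z1 z2 z3) k.
Proof.
  intros Hv. pose proof Hv as [H1 [H2 H3]].
  set (K := S k).
  set (H := fun p1 p2 p3 q1 q2 q3 => Cmul (Cmul (a p1 p2 p3) (b q1 q2 q3))
        (M3 z1 z2 z3 (p1 + q1) (p2 + q2) (p3 + q3) k)).
  assert (HV : forall p1 p2 p3 q1 q2 q3, (K <= p1 + q1 + (p2 + q2) + (p3 + q3))%nat ->
      H p1 p2 p3 q1 q2 q3 = C0).
  { intros; unfold H; rewrite M3_van by (auto; unfold K in *; lia); ring. }
  transitivity (tsum3 K (fun p1 p2 p3 => tsum3 K (fun q1 q2 q3 => H p1 p2 p3 q1 q2 q3))).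
  2:{ unfold mul1. symmetry.
    rewrite (csum_ext (S k) _ (fun u => tsum3 K (fun p1 p2 p3 => tsum3 K (fun q1 q2 q3 =>
       Cmul (Cmul (a p1 p2 p3) (M3 z1 z2 z3 p1 p2 p3 u)) (Cmul (b q1 q2 q3) (M3 z1 z2 z3 q1 q2 q3 (k - u)%nat)))))).
    2:{ intros u Hu. rewrite (comp_big a z1 z2 z3 u K), (comp_big b z1 z2 z3 (k - u) K) by (auto; unfold K; lia).
        apply tsum3_mul. }
    rewrite csum_tsum3. apply tsum3_ext; intros p1 p2 p3.
    rewrite (csum_tsum3 (S k) K (fun u q1 q2 q3 => Cmul (Cmul (a p1 p2 p3) (M3 z1 z2 z3 p1 p2 p3 u))
       (Cmul (b q1 q2 q3) (M3 z1 z2 z3 q1 q2 q3 (k - u)%nat)))).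
    apply tsum3_ext; intros q1 q2 q3. unfold H. rewrite <- M3_mul. unfold mul1. rewrite csum_mul_l. apply csum_ext; intros; ring. }
  rewrite (comp_big _ z1 z2 z3 k K Hv) by (unfold K; lia).
  transitivity (csum K (fun r1 => csum K (fun r2 => csum K (fun r3 =>
     csum (S r1) (fun p1 => csum (S r2) (fun p2 => csum (S r3) (fun p3 =>
       H p1 p2 p3 (r1 - p1)%nat (r2 - p2)%nat (r3 - p3)%nat))))))).
  { unfold tsum3. apply csum_ext; intros r1 _. apply csum_ext; intros r2 _. apply csum_ext; intros r3 _.
    unfold mul3. rewrite csum_mul_r. apply csum_ext; intros p1 Hp1.
    rewrite csum_mul_r. apply csum_ext; intros p2 Hp2.
    rewrite csum_mul_r. apply csum_ext; intros p3 Hp3.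
    unfold H. replace (p1 + (r1 - p1))%nat with r1 by lia.
    replace (p2 + (r2 - p2))%nat with r2 by lia. replace (p3 + (r3 - p3))%nat with r3 by lia. reflexivity. }
  transitivity (csum K (fun r1 => csum (S r1) (fun p1 => csum K (fun r2 => csum (S r2) (fun p2 =>
     csum K (fun r3 => csum (S r3) (fun p3 => H p1 p2 p3 (r1 - p1)%nat (r2 - p2)%nat (r3 - p3)%nat))))))).
  { apply csum_ext; intros r1 _.
    rewrite (csum_ext K _ (fun r2 => csum (S r1) (fun p1 => csum K (fun r3 => csum (S r2) (fun p2 =>
        csum (S r3) (fun p3 => H p1 p2 p3 (r1 - p1)%nat (r2 - p2)%nat (r3 - p3)%nat)))))).
    2:{ intros r2 _. apply csum_swap. }
    rewrite csum_swap. apply csum_ext; intros p1 _. apply csum_ext; intros r2 _.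
    apply csum_swap. }
  transitivity (csum K (fun p1 => csum K (fun q1 => csum K (fun p2 => csum K (fun q2 =>
     csum K (fun p3 => csum K (fun q3 => H p1 p2 p3 q1 q2 q3))))))).
  { rewrite (csum_ext K _ (fun r1 => csum (S r1) (fun p1 => csum K (fun p2 => csum K (fun q2 =>
     csum K (fun p3 => csum K (fun q3 => H p1 p2 p3 (r1 - p1)%nat q2 q3))))))).
    2:{ intros r1 _. apply csum_ext; intros p1 _.
        rewrite (csum_ext K _ (fun r2 => csum (S r2) (fun p2 => csum K (fun p3 => csum K (fun q3 =>
           H p1 p2 p3 (r1 - p1)%nat (r2 - p2)%nat q3))))).
        2:{ intros r2 _. apply csum_ext; intros p2 _.
            apply (tri K (fun p3 q3 => H p1 p2 p3 (r1 - p1)%nat (r2 - p2)%nat q3)).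
            intros; apply HV; lia. }
        apply (tri K (fun p2 q2 => csum K (fun p3 => csum K (fun q3 => H p1 p2 p3 (r1 - p1)%nat q2 q3)))).
        intros; apply csum_zero; intros; apply csum_zero; intros; apply HV; lia. }
    apply (tri K (fun p1 q1 => csum K (fun p2 => csum K (fun q2 =>
       csum K (fun p3 => csum K (fun q3 => H p1 p2 p3 q1 q2 q3)))))).
    intros; apply csum_zero; intros; apply csum_zero; intros;
      apply csum_zero; intros; apply csum_zero; intros; apply HV; lia. }
  unfold tsum3. apply csum_ext; intros p1 _.
  rewrite (csum_ext K _ (fun q1 => csum K (fun p2 => csum K (fun p3 => csum K (fun q2 => csum K (fun q3 =>
     H p1 p2 p3 q1 q2 q3)))))).
  2:{ intros q1 _. apply csum_ext; intros p2 _. apply csum_swap. }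
  rewrite csum_swap. apply csum_ext; intros p2 _. rewrite csum_swap.
  apply csum_ext; intros p3 _. reflexivity.
Qed.
Lemma comp_tsum3 h z1 z2 z3 k :
  comp h z1 z2 z3 k = tsum3 (S k) (fun i j l => Cmul (h i j l) (M3 z1 z2 z3 i j l k)).
Proof. reflexivity. Qed.

Lemma tsum3_add K F G : tsum3 K (fun i j l => Cadd (F i j l) (G i j l)) = Cadd (tsum3 K F) (tsum3 K G).
Proof.
  unfold tsum3. rewrite <- csum_add. apply csum_ext; intros.
  rewrite <- csum_add. apply csum_ext; intros. rewrite <- csum_add. reflexivity.
Qed.

Lemma tsum3_zero K F : (forall i j l, F i j l = C0) -> tsum3 K F = C0.
Proof. intros; unfold tsum3; apply csum_zero; intros; apply csum_zero; intros; apply csum_zero; auto. Qed.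

Lemma comp_add x y z1 z2 z3 k :
  comp (fun i j l => Cadd (x i j l) (y i j l)) z1 z2 z3 k = Cadd (comp x z1 z2 z3 k) (comp y z1 z2 z3 k).
Proof. rewrite !comp_tsum3, <- tsum3_add. apply tsum3_ext; intros; ring. Qed.


Lemma comp_ext x y z1 z2 z3 k : (forall i j l, x i j l = y i j l) -> comp x z1 z2 z3 k = comp y z1 z2 z3 k.
Proof. intros; rewrite !comp_tsum3; apply tsum3_ext; intros; rewrite H; auto. Qed.

Lemma comp_opp x z1 z2 z3 k :
  comp (fun i j l => Copp (x i j l)) z1 z2 z3 k = Copp (comp x z1 z2 z3 k).
Proof.
  rewrite !comp_tsum3. unfold tsum3. rewrite <- csum_opp. apply csum_ext; intros.
  rewrite <- csum_opp. apply csum_ext; intros. rewrite <- csum_opp. apply csum_ext; intros. ring.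
Qed.


Lemma comp_sub x y z1 z2 z3 k :
  comp (fun i j l => Csub (x i j l) (y i j l)) z1 z2 z3 k = Csub (comp x z1 z2 z3 k) (comp y z1 z2 z3 k).
Proof. unfold Csub. rewrite comp_add, comp_opp. reflexivity. Qed.

Lemma tsum3_single K P1 P2 P3 F : (P1 < K)%nat -> (P2 < K)%nat -> (P3 < K)%nat ->
  (forall i j l, (i <> P1 \/ j <> P2 \/ l <> P3) -> F i j l = C0) -> tsum3 K F = F P1 P2 P3.
Proof.
  intros H1 H2 H3 HF. unfold tsum3.
  rewrite (csum_single K P1) by (auto; intros; apply csum_zero; intros; apply csum_zero; intros; apply HF; auto).
  rewrite (csum_single K P2) by (auto; intros; apply csum_zero; intros; apply HF; auto).
  apply csum_single; auto.
Qed.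

Lemma tsum3_slot1 K F : (0 < K)%nat -> (forall i j l, (j <> O \/ l <> O) -> F i j l = C0) ->
  tsum3 K F = csum K (fun i => F i O O).
Proof.
  intros HK HF. unfold tsum3. apply csum_ext; intros i _.
  rewrite (csum_single K O) by (auto; intros; apply csum_zero; intros; apply HF; auto).
  apply csum_single; auto.
Qed.

Lemma tsum3_slot2 K F : (0 < K)%nat -> (forall i j l, (i <> O \/ l <> O) -> F i j l = C0) ->
  tsum3 K F = csum K (fun j => F O j O).
Proof.
  intros HK HF. unfold tsum3.
  rewrite (csum_single K O) by (auto; intros; apply csum_zero; intros; apply csum_zero; intros; apply HF; auto).
  apply csum_ext; intros j _. apply csum_single; auto.
Qed.

Definition delta3 P1 P2 P3 (x : C) : ps3 := fun i j l =>
  if andb (Nat.eqb i P1) (andb (Nat.eqb j P2) (Nat.eqb l P3)) then x else C0.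

Lemma comp_delta P1 P2 P3 x z1 z2 z3 k : van0 z1 z2 z3 ->
  comp (delta3 P1 P2 P3 x) z1 z2 z3 k = Cmul x (M3 z1 z2 z3 P1 P2 P3 k).
Proof.
  intros Hv. rewrite (comp_big _ _ _ _ k (S (k + P1 + P2 + P3))) by (auto; lia).
  rewrite (tsum3_single _ P1 P2 P3) by (try lia; intros i j l Hne; unfold delta3;
    destruct (Nat.eqb i P1) eqn:E1, (Nat.eqb j P2) eqn:E2, (Nat.eqb l P3) eqn:E3; simpl; try ring;
    apply Nat.eqb_eq in E1; apply Nat.eqb_eq in E2; apply Nat.eqb_eq in E3; lia).
  unfold delta3. rewrite !Nat.eqb_refl. reflexivity.
Qed.

Lemma M3_00 z1 z2 z3 i : M3 z1 z2 z3 i O O = pow1 z1 i.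
Proof. unfold M3. simpl. rewrite !mul1_one_r. auto. Qed.
Lemma M3_0j0 z1 z2 z3 j : M3 z1 z2 z3 O j O = pow1 z2 j.
Proof. unfold M3. simpl. rewrite mul1_one_r, mul1_one_l. auto. Qed.

Definition slot1 (f : ps1) : ps3 := fun i j l => if andb (Nat.eqb j 0) (Nat.eqb l 0) then f i else C0.

Lemma comp_slot1 f z1 z2 z3 k :
  comp (slot1 f) z1 z2 z3 k = csum (S k) (fun i => Cmul (f i) (pow1 z1 i k)).
Proof.
  rewrite comp_tsum3, tsum3_slot1 by (try lia; intros i j l Hne; unfold slot1;
    destruct (Nat.eqb j 0) eqn:E1, (Nat.eqb l 0) eqn:E2; simpl; try ring;
    apply Nat.eqb_eq in E1; apply Nat.eqb_eq in E2; lia).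
  apply csum_ext; intros. rewrite M3_00. reflexivity.
Qed.

Lemma comp_gen_g g z1 z2 z3 k :
  comp (gen_g g) z1 z2 z3 k = csum (S k) (fun j => Cmul (g j) (pow1 z2 j k)).
Proof.
  rewrite comp_tsum3, tsum3_slot2 by (try lia; intros i j l Hne; unfold gen_g;
    destruct (Nat.eqb i 0) eqn:E1, (Nat.eqb l 0) eqn:E2; simpl; try ring;
    apply Nat.eqb_eq in E1; apply Nat.eqb_eq in E2; lia).
  apply csum_ext; intros. rewrite M3_0j0. reflexivity.
Qed.

Lemma comp_gen_f f z1 z2 z3 k : van0 z1 z2 z3 ->
  comp (gen_f f) z1 z2 z3 k = Csub (csum (S k) (fun i => Cmul (f i) (pow1 z1 i k))) (mul1 z2 z3 k).
Proof.
  intros Hv. unfold gen_f.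
  rewrite (comp_sub (slot1 f) (delta3 0 1 1 C1)). rewrite comp_slot1, comp_delta by auto.
  unfold M3. simpl. rewrite !mul1_one_r, mul1_one_l. f_equal. ring.
Qed.

Lemma comp_lin a z1 z2 z3 k : van0 z1 z2 z3 ->
  comp (lin a) z1 z2 z3 k = Cadd (Cmul (fst (fst a)) (z1 k)) (Cadd (Cmul (snd (fst a)) (z2 k)) (Cmul (snd a) (z3 k))).
Proof.
  intros Hv.
  rewrite (comp_ext (lin a) (fun i j l => Cadd (delta3 1 0 0 (fst (fst a)) i j l)
     (Cadd (delta3 0 1 0 (snd (fst a)) i j l) (delta3 0 0 1 (snd a) i j l)))).
  2:{ intros i j l. unfold lin, delta3.
      destruct i as [|[|i]], j as [|[|j]], l as [|[|l]]; simpl; ring. }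
  rewrite !comp_add, !comp_delta by auto. unfold M3. simpl.
  rewrite !mul1_one_r, !mul1_one_l. reflexivity.
Qed.
Lemma least_ex (P : nat -> Prop) : (exists n, P n) -> exists n, P n /\ forall j, (j < n)%nat -> ~ P j.
Proof.
  intros [n Hn]. revert Hn. induction n as [n IH] using (well_founded_induction Wf_nat.lt_wf). intros Hn.
  destruct (classic (exists j, (j < n)%nat /\ P j)) as [[j [Hj Pj]]|NE].
  - apply (IH j Hj Pj).
  - exists n. split; auto. intros j Hj Pj. apply NE; eauto.
Qed.

Lemma vord_spec a : (vord a = PInf /\ forall k, a k = C0) \/
    (exists k, vord a = Fin (INR k) /\ a k <> C0 /\ forall j, (j < k)%nat -> a j = C0).
Proof.
  unfold vord. apply epsilon_spec.
  destruct (classic (forall k, a k = C0)) as [H|H].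
  - exists PInf; left; auto.
  - apply not_all_ex_not in H. destruct (least_ex (fun k => a k <> C0) H) as [k [Hk Hl]].
    exists (Fin (INR k)); right; exists k; repeat split; auto.
    intros j Hj. apply NNPP. apply Hl; auto.
Qed.

Lemma vord_le a k : a k <> C0 -> exists j, vord a = Fin (INR j) /\ (j <= k)%nat.
Proof.
  intros H. destruct (vord_spec a) as [[_ A]|[j [E [B D]]]]. elim H; auto.
  exists j; split; auto. destruct (Nat.le_gt_cases j k); auto. elim H; apply D; auto.
Qed.

Lemma vord_ge a N : (forall j, (j < N)%nat -> a j = C0) -> ERle (Fin (INR N)) (vord a).
Proof.
  intros H. destruct (vord_spec a) as [[E _]|[j [E [B D]]]]; rewrite E; simpl; auto.
  apply le_INR. destruct (Nat.le_gt_cases N j); auto. elim B; auto.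
Qed.

Lemma vord_fin a p : vord a = Fin (INR p) -> a p <> C0 /\ forall j, (j < p)%nat -> a j = C0.
Proof.
  intros E. destruct (vord_spec a) as [[E2 _]|[j [E2 [B D]]]]; rewrite E in E2. discriminate.
  injection E2; intro. apply INR_eq in H. subst; auto.
Qed.

Lemma ERle_trans x y z : ERle x y -> ERle y z -> ERle x z.
Proof. destruct x, y, z; simpl; auto; intros; try lra; contradiction. Qed.
Lemma ERle_antisym x y : ERle x y -> ERle y x -> x = y.
Proof. destruct x, y; simpl; intros; auto; try contradiction. f_equal; lra. Qed.

Lemma glb_ex (S : ER -> Prop) c : (forall s, S s -> ERle (Fin c) s) -> exists t, is_glb S t.
Proof.
  intros Hc.
  destruct (classic (exists r, S (Fin r))) as [[r0 Hr0]|NE].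
  - destruct (completeness (fun x => S (Fin (- x)))) as [l [L1 L2]].
    + exists (- c). intros x Hx. specialize (Hc _ Hx). simpl in Hc. lra.
    + exists (- r0). rewrite Ropp_involutive. auto.
    + exists (Fin (- l)). split.
      * intros [r|] Hs; simpl; auto. assert (L := L1 (- r)). unfold is_upper_bound in L1. assert (L3 : S (Fin (- - r))) by (rewrite Ropp_involutive; auto). specialize (L1 _ L3).
        lra.
      * intros [b|] Hu; simpl.
        -- assert (l <= - b). { apply L2. intros x Hx. specialize (Hu _ Hx). simpl in Hu. lra. } lra.
        -- specialize (Hu _ Hr0). simpl in Hu. auto.
  - exists PInf. split.
    + intros [r|] Hs; simpl; auto. elim NE; eauto.
    + intros u _. destruct u; simpl; auto.
Qed.

Lemma lub_ex (S : ER -> Prop) : (exists s, S s) -> exists t, is_lub S t.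
Proof.
  intros [s0 Hs0].
  destruct (classic (S PInf)) as [HP|HP].
  { exists PInf; split. intros [r|] _; simpl; auto. intros u Hu. apply Hu; auto. }
  destruct (classic (exists b, forall r, S (Fin r) -> r <= b)) as [[b Hb]|NB].
  - destruct (completeness (fun x => S (Fin x))) as [l [L1 L2]].
    + exists b. intros x Hx. auto.
    + destruct s0 as [r|]. exists r; auto. contradiction.
    + exists (Fin l). split.
      * intros [r|] Hs; simpl. apply L1; auto. contradiction.
      * intros [u|] Hu; simpl; auto. apply L2. intros x Hx. exact (Hu _ Hx).
  - exists PInf. split. intros [r|] _; simpl; auto.
    intros [u|] Hu; simpl; auto. elim NB. exists u. intros r Hr. exact (Hu _ Hr).
Qed.

Lemma ER_inf_spec S c : (forall s, S s -> ERle (Fin c) s) -> is_glb S (ER_inf S).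
Proof. intros H. unfold ER_inf. apply epsilon_spec. eapply glb_ex; eauto. Qed.
Lemma ER_sup_spec S : (exists s, S s) -> is_lub S (ER_sup S).
Proof. intros H. unfold ER_sup. apply epsilon_spec. apply lub_ex; auto. Qed.

Lemma curve_order z1 z2 z3 : in_Gamma z1 z2 z3 -> exists m, (1 <= m)%nat /\
  (forall j, (j < m)%nat -> z1 j = C0 /\ z2 j = C0 /\ z3 j = C0) /\
  (z1 m <> C0 \/ z2 m <> C0 \/ z3 m <> C0) /\ vcurve z1 z2 z3 = Fin (INR m).
Proof.
  intros [_ [_ [_ [H1 [H2 [H3 Hex]]]]]].
  destruct (least_ex _ Hex) as [m [Hm Hl]].
  assert (Hz : forall j, (j < m)%nat -> z1 j = C0 /\ z2 j = C0 /\ z3 j = C0).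
  { intros j Hj. specialize (Hl j Hj). repeat split; apply NNPP; intro; apply Hl; auto. }
  exists m. assert (1 <= m)%nat.
  { destruct m; auto. rewrite H1, H2, H3 in Hm. intuition. lia. }
  split; [auto|split; [auto|split; [auto|]]].
  assert (G1 := vord_ge z1 m (fun j Hj => proj1 (Hz j Hj))).
  assert (G2 := vord_ge z2 m (fun j Hj => proj1 (proj2 (Hz j Hj)))).
  assert (G3 := vord_ge z3 m (fun j Hj => proj2 (proj2 (Hz j Hj)))).
  assert (Hmin : forall u v, ERle (Fin (INR m)) u -> ERle (Fin (INR m)) v ->
     (u = Fin (INR m) \/ v = Fin (INR m)) -> ERmin u v = Fin (INR m)).
  { intros [u|] [v|] Hu Hv [E|E]; simpl in *; try discriminate; auto;
    injection E; intro; subst; f_equal; [apply Rmin_left|apply Rmin_right]; auto. }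
  assert (Ex : forall z : ps1, z m <> C0 -> (forall j, (j < m)%nat -> z j = C0) -> vord z = Fin (INR m)).
  { intros z Hzm Hzl. destruct (vord_le z m Hzm) as [j0 [E Hj]]. rewrite E.
    destruct (Nat.eq_dec j0 m). subst; auto. elim (proj1 (vord_fin z j0 E)). apply Hzl. lia. }
  unfold vcurve. apply Hmin; auto.
  - destruct (vord z2), (vord z3); simpl in *; auto; try contradiction. apply Rmin_glb; auto.
  - destruct Hm as [A|[A|A]].
    + left. apply Ex; auto. intros; apply Hz; auto.
    + right. apply Hmin; auto. left; apply Ex; auto; intros; apply Hz; auto.
    + right. apply Hmin; auto. right; apply Ex; auto; intros; apply Hz; auto.
Qed.
Definition inner gs z1 z2 z3 := ER_inf (fun s => exists h, in_ideal gs h /\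
   s = ERdiv (vord (comp h z1 z2 z3)) (vcurve z1 z2 z3)).

Lemma T1_unfold gs : T1 gs = ER_sup (fun t => exists z1 z2 z3, in_Gamma z1 z2 z3 /\ t = inner gs z1 z2 z3).
Proof. reflexivity. Qed.

Lemma ratio_nonneg z1 z2 z3 x : in_Gamma z1 z2 z3 -> ERle (Fin 0) (ERdiv (vord x) (vcurve z1 z2 z3)).
Proof.
  intros HG. destruct (curve_order _ _ _ HG) as [m [Hm [_ [_ E]]]]. rewrite E.
  destruct (vord_spec x) as [[E2 _]|[j [E2 _]]]; rewrite E2; simpl; auto.
  apply le_INR in Hm. simpl in Hm. unfold Rdiv. apply Rmult_le_pos. apply pos_INR. left; apply Rinv_0_lt_compat; lra.
Qed.

Lemma inner_spec gs z1 z2 z3 : in_Gamma z1 z2 z3 -> is_glb (fun s => exists h, in_ideal gs h /\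
   s = ERdiv (vord (comp h z1 z2 z3)) (vcurve z1 z2 z3)) (inner gs z1 z2 z3).
Proof.
  intros HG. apply (ER_inf_spec _ 0). intros s [h [_ E]]; subst. apply ratio_nonneg; auto.
Qed.

Lemma inner_le gs z1 z2 z3 N : in_Gamma z1 z2 z3 ->
  (exists h, in_ideal gs h /\ ERle (ERdiv (vord (comp h z1 z2 z3)) (vcurve z1 z2 z3)) N) ->
  ERle (inner gs z1 z2 z3) N.
Proof.
  intros HG [h [Hh Hle]]. destruct (inner_spec gs _ _ _ HG) as [A _].
  eapply ERle_trans; [|exact Hle]. apply A. eauto.
Qed.

Lemma inner_ge gs z1 z2 z3 N : in_Gamma z1 z2 z3 ->
  (forall h, in_ideal gs h -> ERle N (ERdiv (vord (comp h z1 z2 z3)) (vcurve z1 z2 z3))) ->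
  ERle N (inner gs z1 z2 z3).
Proof.
  intros HG H. destruct (inner_spec gs _ _ _ HG) as [_ B]. apply B.
  intros s [h [Hh E]]; subst; auto.
Qed.

Lemma Cnorm_C0 : Cnorm C0 = 0.
Proof. unfold Cnorm, C0. simpl fst; simpl snd. replace (0 ^ 2 + 0 ^ 2) with 0 by ring. apply sqrt_0. Qed.

Lemma fin_conv a D : (forall k, (D < k)%nat -> a k = C0) -> conv1 a.
Proof.
  intros H.
  assert (B : exists M, forall k, (k <= D)%nat -> Cnorm (a k) <= M).
  { clear H. induction D.
    - exists (Cnorm (a O)). intros k Hk. replace k with O by lia. lra.
    - destruct IHD as [M HM]. exists (Rmax M (Cnorm (a (S D)))). intros k Hk.
      destruct (Nat.eq_dec k (S D)). subst; apply Rmax_r.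
      eapply Rle_trans; [apply HM; lia|apply Rmax_l]. }
  destruct B as [M HM]. exists (Rmax M 0), 1. split. lra. intros k.
  rewrite Rfunctions.pow1, Rmult_1_r. destruct (Nat.le_gt_cases k D).
  eapply Rle_trans; [apply HM; auto|apply Rmax_l].
  rewrite H by auto. rewrite Cnorm_C0. apply Rmax_r.
Qed.

Definition Xs : ps1 := fun k => if Nat.eqb k 1 then C1 else C0.
Definition Z0 : ps1 := fun _ => C0.

Lemma Gamma_ne : in_Gamma Xs Z0 Z0.
Proof.
  assert (CZ : conv1 Z0) by (apply (fin_conv _ 0); auto).
  repeat split; auto.
  - apply (fin_conv _ 1). intros k Hk; unfold Xs. destruct (Nat.eqb k 1) eqn:E; auto.
    apply Nat.eqb_eq in E; lia.
  - exists 1%nat. left. unfold Xs, C1, C0. simpl. intro E; injection E; lra.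
Qed.

Lemma T1_le gs N : (forall z1 z2 z3, in_Gamma z1 z2 z3 -> ERle (inner gs z1 z2 z3) N) -> ERle (T1 gs) N.
Proof.
  intros H. rewrite T1_unfold. destruct (ER_sup_spec (fun t => exists z1 z2 z3, in_Gamma z1 z2 z3 /\ t = inner gs z1 z2 z3)) as [_ B].
  - exists (inner gs Xs Z0 Z0). exists Xs, Z0, Z0. split; auto. apply Gamma_ne.
  - apply B. intros s [z1 [z2 [z3 [HG E]]]]. subst; auto.
Qed.

Lemma T1_ge gs N : (exists z1 z2 z3, in_Gamma z1 z2 z3 /\ ERle N (inner gs z1 z2 z3)) -> ERle N (T1 gs).
Proof.
  intros [z1 [z2 [z3 [HG H]]]]. rewrite T1_unfold.
  destruct (ER_sup_spec (fun t => exists z1 z2 z3, in_Gamma z1 z2 z3 /\ t = inner gs z1 z2 z3)) as [A _].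
  - exists (inner gs z1 z2 z3), z1, z2, z3; auto.
  - eapply ERle_trans; [exact H|]. apply A. eauto.
Qed.

Lemma T1_nonneg gs : ERle (Fin 0) (T1 gs).
Proof.
  apply T1_ge. exists Xs, Z0, Z0. split. apply Gamma_ne.
  apply inner_ge. apply Gamma_ne. intros; apply ratio_nonneg, Gamma_ne.
Qed.

Definition one3 : ps3 := delta3 0 0 0 C1.
Definition zero3 : ps3 := fun _ _ _ => C0.

Lemma conv3_delta0 x : Cnorm x <= 1 -> conv3 (delta3 0 0 0 x).
Proof.
  intros Hx. exists 1, 1. split. lra. intros i j l. rewrite Rfunctions.pow1, Rmult_1_r.
  unfold delta3. destruct (andb _ _); auto. rewrite Cnorm_C0. lra.
Qed.
Lemma conv3_one : conv3 one3.
Proof. apply conv3_delta0. unfold Cnorm, C1. simpl fst; simpl snd. replace (1 ^ 2 + 0 ^ 2) with 1 by ring. rewrite sqrt_1; lra. Qed.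
Lemma conv3_zero : conv3 zero3.
Proof.
  exists 0, 1. split. lra. intros. unfold zero3. rewrite Cnorm_C0. lra.
Qed.

Lemma mul3_one x i j l : mul3 one3 x i j l = x i j l.
Proof.
  unfold mul3, one3, delta3.
  rewrite (csum_single (S i) 0).
  2: lia.
  2:{ intros i0 Hi Hne; apply csum_zero; intros; apply csum_zero; intros;
      rewrite (proj2 (Nat.eqb_neq i0 0) Hne); simpl; ring. }
  rewrite (csum_single (S j) 0).
  2: lia.
  2:{ intros i0 Hi Hne; apply csum_zero; intros;
      rewrite (proj2 (Nat.eqb_neq i0 0) Hne); simpl; ring. }
  rewrite (csum_single (S l) 0).
  2: lia.
  2:{ intros i0 Hi Hne; rewrite (proj2 (Nat.eqb_neq i0 0) Hne); simpl; ring. }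
  simpl. rewrite !Nat.sub_0_r. ring.
Qed.

Lemma mul3_zero x i j l : mul3 zero3 x i j l = C0.
Proof. unfold mul3, zero3. apply csum_zero; intros; apply csum_zero; intros; apply csum_zero; intros; ring. Qed.

Lemma in_ideal_1 g1 g2 g3 : in_ideal [g1; g2; g3] g1.
Proof.
  exists [one3; zero3; zero3]. split; auto. split. repeat constructor; auto using conv3_one, conv3_zero.
  intros; simpl. rewrite mul3_one, !mul3_zero. ring.
Qed.
Lemma in_ideal_2 g1 g2 g3 : in_ideal [g1; g2; g3] g2.
Proof.
  exists [zero3; one3; zero3]. split; auto. split. repeat constructor; auto using conv3_one, conv3_zero.
  intros; simpl. rewrite mul3_one, !mul3_zero. ring.
Qed.
Lemma in_ideal_3 g1 g2 g3 : in_ideal [g1; g2; g3] g3.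
Proof.
  exists [zero3; zero3; one3]. split; auto. split. repeat constructor; auto using conv3_one, conv3_zero.
  intros; simpl. rewrite mul3_one, !mul3_zero. ring.
Qed.

Lemma ideal_van g1 g2 g3 h z1 z2 z3 N : van0 z1 z2 z3 -> in_ideal [g1; g2; g3] h ->
  (forall k, (k < N)%nat -> comp g1 z1 z2 z3 k = C0) ->
  (forall k, (k < N)%nat -> comp g2 z1 z2 z3 k = C0) ->
  (forall k, (k < N)%nat -> comp g3 z1 z2 z3 k = C0) ->
  forall k, (k < N)%nat -> comp h z1 z2 z3 k = C0.
Proof.
  intros Hv [cs [Hl [_ Hh]]] V1 V2 V3 k Hk.
  destruct cs as [|c1 [|c2 [|c3 [|c4 cs]]]]; simpl in Hl; try discriminate.
  rewrite (comp_ext _ _ z1 z2 z3 k Hh). simpl.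
  rewrite !comp_add, !comp_mul by auto.
  assert (Z : comp (fun _ _ _ => C0) z1 z2 z3 k = C0).
  { rewrite comp_tsum3. apply tsum3_zero; intros; ring. }
  rewrite Z.
  assert (Mv : forall a b, (forall k, (k < N)%nat -> b k = C0) -> mul1 a b k = C0).
  { intros a b Hb. destruct (mul_low a b 0 N (fun j Hj => ltac:(lia)) Hb) as [A _]. apply A; lia. }
  rewrite !Mv by auto. ring.
Qed.
Lemma slot_val f z o p : (1 <= o)%nat -> (forall j, (j < o)%nat -> z j = C0) ->
  (forall i, (i < p)%nat -> f i = C0) ->
  (forall k, (k < p * o)%nat -> csum (S k) (fun i => Cmul (f i) (pow1 z i k)) = C0) /\
  csum (S (p * o)) (fun i => Cmul (f i) (pow1 z i (p * o)%nat)) = Cmul (f p) (Cpow (z o) p).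
Proof.
  intros Ho Hz Hf. split.
  - intros k Hk. apply csum_zero; intros i Hi. destruct (Nat.lt_ge_cases i p).
    rewrite Hf by auto; ring. rewrite (proj1 (pow_low z o Hz i)). ring. nia.
  - rewrite (csum_single _ p). rewrite (proj2 (pow_low z o Hz p)). auto. nia.
    intros i Hi Hne. destruct (Nat.lt_ge_cases i p).
    rewrite Hf by auto; ring. rewrite (proj1 (pow_low z o Hz i)). ring. nia.
Qed.

Lemma ratio_le x m j N : (1 <= m)%nat -> x j <> C0 -> (j <= N * m)%nat ->
  ERle (ERdiv (vord x) (Fin (INR m))) (Fin (INR N)).
Proof.
  intros Hm Hx Hj. destruct (vord_le x j Hx) as [j' [E Hj']]. rewrite E. simpl.
  assert (Hm' : 0 < INR m) by (apply lt_0_INR; lia).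
  assert (INR j' <= INR N * INR m) by (rewrite <- mult_INR; apply le_INR; lia).
  apply (Rmult_le_reg_r (INR m)); auto. unfold Rdiv. rewrite Rmult_assoc, Rinv_l by lra. lra.
Qed.

Lemma Csub_0 x : Csub x C0 = x.
Proof. ring. Qed.

Lemma upper_common f g p q z1 z2 z3 w m :
  vord f = Fin (INR p) -> vord g = Fin (INR q) -> in_Gamma z1 z2 z3 -> van0 z1 z2 z3 ->
  (1 <= m)%nat -> vcurve z1 z2 z3 = Fin (INR m) ->
  forall N, (exists h, in_ideal [gen_f f; gen_g g; w] h /\ exists j, comp h z1 z2 z3 j <> C0 /\ (j <= N * m)%nat) ->
  ERle (inner [gen_f f; gen_g g; w] z1 z2 z3) (Fin (INR N)).
Proof.
  intros _ _ HG _ Hm E N [h [Hh [j [Hj HjN]]]]. apply inner_le; auto. exists h; split; auto.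
  rewrite E. eapply ratio_le; eauto.
Qed.

Lemma Tq_upper f g p q z1 z2 z3 : vord f = Fin (INR p) -> vord g = Fin (INR q) -> (1 <= p)%nat ->
  in_Gamma z1 z2 z3 ->
  ERle (inner [gen_f f; gen_g g; lin (C0, C0, C1)] z1 z2 z3) (Fin (INR (Nat.max p q))).
Proof.
  intros Ef Eg Hp HG. destruct (curve_order _ _ _ HG) as [m [Hm [Hz [Hnz Ev]]]].
  assert (Hv : van0 z1 z2 z3) by (destruct HG as [_ [_ [_ [A [B [D _]]]]]]; repeat split; auto).
  destruct (vord_fin f p Ef) as [Fp Fl]. destruct (vord_fin g q Eg) as [Gq Gl].
  apply (upper_common f g p q _ _ _ _ m Ef Eg HG Hv Hm Ev).
  set (N := Nat.max p q).
  destruct (classic (z3 m <> C0)) as [H3|H3].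
  { exists (lin (C0, C0, C1)). split. apply in_ideal_3. exists m. split.
    rewrite comp_lin by auto. simpl. replace (Cadd (Cmul C0 (z1 m)) (Cadd (Cmul C0 (z2 m)) (Cmul C1 (z3 m)))) with (z3 m) by ring. auto.
    unfold N; nia. }
  apply NNPP in H3.
  destruct (classic (z2 m <> C0)) as [H2|H2].
  { exists (gen_g g). split. apply in_ideal_2. exists (q * m)%nat. split.
    rewrite comp_gen_g. rewrite (proj2 (slot_val g z2 m q Hm (fun j Hj => proj1 (proj2 (Hz j Hj))) Gl)).
    apply Cmul_nz; auto. apply Cpow_nz; auto. unfold N; nia. }
  apply NNPP in H2.
  assert (H1 : z1 m <> C0) by (destruct Hnz as [A|[A|A]]; auto; contradiction).
  destruct (classic (exists j, (j <= p * m)%nat /\ z3 j <> C0)) as [[j [Hj H3j]]|NE].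
  { exists (lin (C0, C0, C1)). split. apply in_ideal_3. exists j. split.
    rewrite comp_lin by auto. simpl. replace (Cadd (Cmul C0 (z1 j)) (Cadd (Cmul C0 (z2 j)) (Cmul C1 (z3 j)))) with (z3 j) by ring. auto.
    unfold N; nia. }
  exists (gen_f f). split. apply in_ideal_1. exists (p * m)%nat. split.
  - rewrite comp_gen_f by auto.
    rewrite (proj2 (slot_val f z1 m p Hm (fun j Hj => proj1 (Hz j Hj)) Fl)).
    assert (Z : mul1 z2 z3 (p * m)%nat = C0).
    { destruct (mul_low z2 z3 (S m) (S (p * m))) as [A _].
      - intros j Hj. destruct (Nat.eq_dec j m). subst; auto. apply Hz; lia.
      - intros j Hj. apply NNPP. intro Hc. apply NE. exists j. split; auto. lia.
      - apply A; lia. }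
    rewrite Z, Csub_0. apply Cmul_nz; auto. apply Cpow_nz; auto.
  - unfold N; nia.
Qed.

Lemma beta_upper f g p q a z1 z2 z3 : vord f = Fin (INR p) -> vord g = Fin (INR q) -> (3 <= p)%nat ->
  (2 <= q)%nat -> snd a <> C0 -> in_Gamma z1 z2 z3 ->
  ERle (inner [gen_f f; gen_g g; lin a] z1 z2 z3) (Fin (INR (q * (p - 1)))).
Proof.
  intros Ef Eg Hp Hq Ha HG. destruct (curve_order _ _ _ HG) as [m [Hm [Hz [Hnz Ev]]]].
  assert (HP : (2 <= p - 1)%nat) by lia. set (r := (p - 1)%nat) in *. assert (Hpr : p = S r) by (unfold r; lia). clearbody r. rewrite Hpr in Ef.
  assert (Hv : van0 z1 z2 z3) by (destruct HG as [_ [_ [_ [A [B [D _]]]]]]; repeat split; auto).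
  destruct (vord_fin f (S r) Ef) as [Fp Fl]. destruct (vord_fin g q Eg) as [Gq Gl].
  apply (upper_common f g (S r) q _ _ _ _ m Ef Eg HG Hv Hm Ev).
  destruct (classic (exists j, (j <= r * m)%nat /\ z2 j <> C0)) as [[j [Hj H2j]]|NE].
  { destruct (least_ex (fun j => z2 j <> C0)) as [o [Ho Hol]]. eauto.
    assert (Hoj : (o <= j)%nat). { destruct (Nat.le_gt_cases o j); auto. elim (Hol j); auto. }
    assert (Hzo : forall i, (i < o)%nat -> z2 i = C0) by (intros; apply NNPP; auto).
    assert (Ho1 : (1 <= o)%nat). { destruct o. elim Ho. apply Hv. lia. }
    exists (gen_g g). split. apply in_ideal_2. exists (q * o)%nat. split.
    rewrite comp_gen_g. rewrite (proj2 (slot_val g z2 o q Ho1 Hzo Gl)).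
    apply Cmul_nz; auto. apply Cpow_nz; auto. nia. }
  assert (Z2 : forall j, (j <= r * m)%nat -> z2 j = C0).
  { intros j Hj. apply NNPP. intro Hc. apply NE; eauto. }
  destruct (classic (z1 m = C0)) as [H1|H1].
  { assert (H3 : z3 m <> C0).
    { destruct Hnz as [A|[A|A]]; [elim A; exact H1|elim A; apply Z2; nia|exact A]. }
    exists (lin a). split. apply in_ideal_3. exists m. split.
    rewrite comp_lin by auto. rewrite H1, (Z2 m) by nia.
    replace (Cadd (Cmul (fst (fst a)) C0) (Cadd (Cmul (snd (fst a)) C0) (Cmul (snd a) (z3 m)))) with (Cmul (snd a) (z3 m)) by ring.
    apply Cmul_nz; auto. rewrite <- (Nat.mul_1_l m) at 1. apply Nat.mul_le_mono_r. nia. }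
  exists (gen_f f). split. apply in_ideal_1. exists (S r * m)%nat. split.
  - rewrite comp_gen_f by auto.
    rewrite (proj2 (slot_val f z1 m (S r) Hm (fun j Hj => proj1 (Hz j Hj)) Fl)).
    assert (Z : mul1 z2 z3 (S r * m)%nat = C0).
    { destruct (mul_low z2 z3 (S (r * m)) m) as [A _].
      - intros j Hj. apply Z2; lia.
      - intros j Hj. apply Hz; auto.
      - apply A; nia. }
    rewrite Z, Csub_0. apply Cmul_nz; auto. apply Cpow_nz; auto.
  - nia.
Qed.
Lemma mul1_Xs b k : mul1 Xs b k = match k with O => C0 | S k' => b k' end.
Proof.
  unfold mul1. destruct k. simpl. unfold Xs; simpl. ring.
  rewrite (csum_single _ 1). unfold Xs; simpl. rewrite Nat.sub_0_r. ring. lia.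
  intros i Hi Hne. unfold Xs. rewrite (proj2 (Nat.eqb_neq i 1) Hne). ring.
Qed.

Lemma powX i k : pow1 Xs i k = if Nat.eqb k i then C1 else C0.
Proof.
  revert k; induction i; intros k.
  - simpl. unfold one1. destruct k; reflexivity.
  - rewrite pow1_S, mul1_Xs. destruct k. reflexivity. rewrite IHi. reflexivity.
Qed.

Section Curve.
Variables (f : ps1) (p : nat) (a1 a2 a3 : C).
Hypothesis Hp : (3 <= p)%nat.
Hypothesis Hf : forall j, (j < p)%nat -> f j = C0.
Hypothesis Ha1 : a1 <> C0.
Hypothesis Ha3 : a3 <> C0.

Definition val (n : nat) (w : nat -> C) : C :=
  Cmul (Copp (Cinv a1)) (Cadd (Cmul a3 (f (S n)))
     (Cmul a2 (csum (S (S n)) (fun i => Cmul (w i) (w (S n - i)%nat))))).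

Fixpoint U (n : nat) : nat -> C :=
  match n with
  | O => fun _ => C0
  | S n' => fun i => if Nat.ltb i n' then U n' i else if Nat.eqb i n' then val n' (U n') else C0
  end.

Definition u (n : nat) : C := val n (U n).

Lemma U_eq n i : U n i = if Nat.ltb i n then u i else C0.
Proof.
  revert i; induction n; intros i. reflexivity.
  simpl. rewrite IHn. destruct (Nat.ltb i n) eqn:E1.
  - apply Nat.ltb_lt in E1. replace (Nat.ltb i (S n)) with true; auto. symmetry; apply Nat.ltb_lt; lia.
  - apply Nat.ltb_ge in E1. destruct (Nat.eqb i n) eqn:E2.
    + apply Nat.eqb_eq in E2; subst. replace (Nat.ltb n (S n)) with true; auto. symmetry; apply Nat.ltb_lt; lia.
    + apply Nat.eqb_neq in E2. replace (Nat.ltb i (S n)) with false; auto. symmetry; apply Nat.ltb_ge; lia.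
Qed.

Lemma u_low i : (i < p - 1)%nat -> u i = C0.
Proof.
  induction i as [i IH] using (well_founded_induction Wf_nat.lt_wf). intros Hi.
  unfold u, val. rewrite Hf by lia.
  rewrite csum_zero. ring.
  intros j Hj. rewrite !U_eq. destruct (Nat.ltb j i) eqn:E.
  apply Nat.ltb_lt in E. rewrite IH by lia. ring. ring.
Qed.

Lemma u_eq n : Cadd (Cmul a3 (f (S n))) (Cadd (Cmul a1 (u n))
   (Cmul a2 (csum (S (S n)) (fun i => Cmul (u i) (u (S n - i)%nat))))) = C0.
Proof.
  assert (Hs : csum (S (S n)) (fun i => Cmul (U n i) (U n (S n - i)%nat)) =
               csum (S (S n)) (fun i => Cmul (u i) (u (S n - i)%nat))).
  { apply csum_ext; intros i Hi. rewrite !U_eq.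
    destruct (Nat.lt_ge_cases i n) as [L1|L1]; destruct (Nat.lt_ge_cases (S n - i) n) as [L2|L2].
    - rewrite (proj2 (Nat.ltb_lt _ _) L1), (proj2 (Nat.ltb_lt _ _) L2). auto.
    - rewrite (u_low i) by lia. destruct (Nat.ltb i n), (Nat.ltb (S n - i) n); ring.
    - rewrite (u_low (S n - i)) by lia. destruct (Nat.ltb i n), (Nat.ltb (S n - i) n); ring.
    - rewrite (u_low (S n - i)) by lia. destruct (Nat.ltb i n), (Nat.ltb (S n - i) n); ring. }
  change (u n) with (val n (U n)). unfold val. rewrite Hs.
  set (X := Cadd (Cmul a3 (f (S n))) (Cmul a2 (csum (S (S n)) (fun i => Cmul (u i) (u (S n - i)%nat))))).
  replace (Cmul a1 (Cmul (Copp (Cinv a1)) X)) with (Copp (Cmul (Cmul a1 (Cinv a1)) X)) by ring.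
  rewrite Cinv_r by auto. unfold X. ring.
Qed.

Variable D : nat.
Definition cz2 : ps1 := fun k => if Nat.leb k D then u k else C0.
Definition cz3 : ps1 := fun k => Copp (Cmul (Cinv a3) (Cadd (Cmul a1 (Xs k)) (Cmul a2 (cz2 k)))).

Lemma cz2_low j : (j < p - 1)%nat -> cz2 j = C0.
Proof. intros; unfold cz2. destruct (Nat.leb j D); auto. apply u_low; auto. Qed.

Lemma curve_van : van0 Xs cz2 cz3.
Proof.
  assert (Z2 : cz2 O = C0) by (apply cz2_low; lia).
  repeat split; auto. unfold cz3. rewrite Z2. unfold Xs; simpl. ring.
Qed.

Lemma curve_Gamma : in_Gamma Xs cz2 cz3.
Proof.
  destruct curve_van as [V1 [V2 V3]].
  assert (C2 : forall k, (D < k)%nat -> cz2 k = C0).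
  { intros k Hk; unfold cz2. replace (Nat.leb k D) with false; auto. symmetry; apply Nat.leb_gt; auto. }
  repeat split; auto.
  - apply (fin_conv _ 1). intros k Hk; unfold Xs. rewrite (proj2 (Nat.eqb_neq k 1)) by lia; auto.
  - apply (fin_conv _ D); auto.
  - apply (fin_conv _ (S D)). intros k Hk. unfold cz3. rewrite C2 by lia. unfold Xs.
    rewrite (proj2 (Nat.eqb_neq k 1)) by lia. ring.
  - exists 1%nat. left. unfold Xs, C1, C0. simpl. intro E; injection E; lra.
Qed.

Lemma curve_vcurve : vcurve Xs cz2 cz3 = Fin (INR 1).
Proof.
  destruct (curve_order _ _ _ curve_Gamma) as [m [Hm [Hz [_ E]]]]. rewrite E.
  destruct (Nat.eq_dec m 1). subst; auto.
  destruct (Hz 1%nat) as [A _]. lia. unfold Xs in A. simpl in A. unfold C1, C0 in A. injection A; lra.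
Qed.

Lemma curve_W k : comp (lin (a1, a2, a3)) Xs cz2 cz3 k = C0.
Proof.
  rewrite comp_lin by apply curve_van. simpl. unfold cz3.
  set (Y := Cadd (Cmul a1 (Xs k)) (Cmul a2 (cz2 k))).
  replace (Cadd (Cmul a1 (Xs k)) (Cadd (Cmul a2 (cz2 k)) (Cmul a3 (Copp (Cmul (Cinv a3) Y)))))
    with (Csub Y (Cmul (Cmul a3 (Cinv a3)) Y)) by (unfold Y; ring).
  rewrite Cinv_r by auto. ring.
Qed.

Lemma curve_G g q : (forall j, (j < q)%nat -> g j = C0) ->
  forall k, (k < q * (p - 1))%nat -> comp (gen_g g) Xs cz2 cz3 k = C0.
Proof.
  intros Hg k Hk. rewrite comp_gen_g.
  apply (proj1 (slot_val g cz2 (p - 1) q ltac:(lia) cz2_low Hg)); auto.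
Qed.

Lemma curve_F k : (k <= D)%nat -> comp (gen_f f) Xs cz2 cz3 k = C0.
Proof.
  intros Hk. rewrite comp_gen_f by apply curve_van.
  rewrite (csum_single _ k (fun i => Cmul (f i) (pow1 Xs i k))) by (try lia; intros i Hi Hne;
     rewrite powX, (proj2 (Nat.eqb_neq k i)) by auto; ring).
  rewrite powX, Nat.eqb_refl.
  assert (E : mul1 cz2 cz3 k = Copp (Cmul (Cinv a3) (Cadd (Cmul a1 (mul1 cz2 Xs k)) (Cmul a2 (mul1 cz2 cz2 k))))).
  { unfold mul1 at 2 3. rewrite !csum_mul_l, <- csum_add, csum_mul_l, <- csum_opp.
    unfold mul1, cz3. apply csum_ext; intros; ring. }
  rewrite E, mul1_comm, mul1_Xs.
  assert (Hq : forall i, (i <= k)%nat -> cz2 i = u i).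
  { intros i Hi; unfold cz2. replace (Nat.leb i D) with true; auto. symmetry; apply Nat.leb_le; lia. }
  assert (S2 : mul1 cz2 cz2 k = csum (S k) (fun i => Cmul (u i) (u (k - i)%nat))).
  { unfold mul1. apply csum_ext; intros. rewrite !Hq by lia. auto. }
  rewrite S2. destruct k as [|n].
  - rewrite Hf by lia. simpl. rewrite u_low by lia. ring.
  - rewrite Hq by lia.
    set (T := csum (S (S n)) (fun i => Cmul (u i) (u (S n - i)%nat))).
    assert (EQ := u_eq n). fold T in EQ.
    replace (Csub (Cmul (f (S n)) C1) (Copp (Cmul (Cinv a3) (Cadd (Cmul a1 (u n)) (Cmul a2 T)))))
      with (Cadd (Cmul (Csub C1 (Cmul a3 (Cinv a3))) (f (S n)))
                 (Cmul (Cinv a3) (Cadd (Cmul a3 (f (S n))) (Cadd (Cmul a1 (u n)) (Cmul a2 T))))) by ring.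
    rewrite EQ, Cinv_r by auto. ring.
Qed.

End Curve.

Lemma ERdiv_1_ge N x : ERle (Fin (INR N)) x -> ERle (Fin (INR N)) (ERdiv x (Fin (INR 1))).
Proof. destruct x; simpl; auto. intros. unfold Rdiv. rewrite Rinv_1, Rmult_1_r. auto. Qed.

Lemma beta_lower f g p q a1 a2 a3 : vord f = Fin (INR p) -> vord g = Fin (INR q) -> (3 <= p)%nat ->
  a1 <> C0 -> a3 <> C0 ->
  ERle (Fin (INR (q * (p - 1)))) (T1 [gen_f f; gen_g g; lin (a1, a2, a3)]).
Proof.
  intros Ef Eg Hp H1 H3. destruct (vord_fin f p Ef) as [_ Fl]. destruct (vord_fin g q Eg) as [_ Gl].
  set (D := (q * (p - 1))%nat).
  apply T1_ge. exists Xs, (cz2 f a1 a2 a3 D), (cz3 f a1 a2 a3 D). split.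
  apply (curve_Gamma f p); auto.
  apply inner_ge. apply (curve_Gamma f p); auto.
  intros h Hh. rewrite (curve_vcurve f p) by auto. apply ERdiv_1_ge. apply vord_ge.
  apply (ideal_van _ _ _ h _ _ _ _ (curve_van f p a1 a2 a3 Hp Fl D) Hh).
  - intros; apply (curve_F f p); auto. unfold D in *; lia.
  - intros; apply (curve_G f p _ _ _ Hp Fl D g q); auto.
  - intros; apply (curve_W f p); auto.
Qed.
Definition cc (F : R -> C) := continuity_pt (fun e => fst (F e)) 0 /\ continuity_pt (fun e => snd (F e)) 0.

Lemma cc_const x : cc (fun _ => x).
Proof. split; apply continuity_pt_const; intros a b; auto. Qed.

Lemma cc_add F G : cc F -> cc G -> cc (fun e => Cadd (F e) (G e)).
Proof. intros [A B] [D E]; split; simpl; apply continuity_pt_plus; auto. Qed.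

Lemma cc_mul F G : cc F -> cc G -> cc (fun e => Cmul (F e) (G e)).
Proof.
  intros [A B] [D E]; split; simpl.
  apply continuity_pt_minus; apply continuity_pt_mult; auto.
  apply continuity_pt_plus; apply continuity_pt_mult; auto.
Qed.

Lemma cc_pow F n : cc F -> cc (fun e => Cpow (F e) n).
Proof. intros H; induction n; simpl. apply cc_const. apply cc_mul; auto. Qed.

Lemma cc_shift x : cc (fun e => Cadd x (e, 0)).
Proof.
  split; simpl. apply continuity_pt_plus. apply continuity_pt_const; intros a b; auto. exact (derivable_continuous_pt id 0 (derivable_pt_id 0)).
  apply continuity_pt_plus; apply continuity_pt_const; intros a b; auto.
Qed.

Lemma cc_peval P (A : R -> C3) : cc (fun e => fst (fst (A e))) -> cc (fun e => snd (fst (A e))) ->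
  cc (fun e => snd (A e)) -> cc (fun e => peval P (A e)).
Proof.
  intros H1 H2 H3. induction P as [|m P IH].
  - unfold peval; simpl. apply cc_const.
  - destruct m as [c [[i j] l]]. unfold peval in *; simpl.
    apply cc_add; auto. apply cc_mul. apply cc_const.
    apply cc_mul. apply cc_pow; auto. apply cc_mul; apply cc_pow; auto.
Qed.

Lemma cont_nz (F : R -> R) : continuity_pt F 0 -> F 0 <> 0 -> exists d, 0 < d /\ forall e, 0 < e < d -> F e <> 0.
Proof.
  intros Hc Hn. unfold continuity_pt, continue_in, limit1_in, limit_in in Hc.
  destruct (Hc (Rabs (F 0))) as [d [Hd H]]. apply Rabs_pos_lt; auto.
  exists d; split; auto. intros e He Hz.
  assert (L : R_dist (F e) (F 0) < Rabs (F 0)).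
  { apply H. split. split. constructor. lra. simpl. unfold R_dist. rewrite Rminus_0_r, Rabs_right; lra. }
  unfold R_dist in L. rewrite Hz, Rminus_0_l, Rabs_Ropp in L. lra.
Qed.

Lemma Cshift_0 x : Cadd x (0, 0) = x.
Proof. apply C_eq; simpl; ring. Qed.

Lemma perturb P (a' : C3) : peval P a' <> C0 ->
  exists a : C3, peval P a <> C0 /\ fst (fst a) <> C0 /\ snd a <> C0.
Proof.
  intros Hn. destruct a' as [[x1 x2] x3].
  set (A := fun e : R => (Cadd x1 (e, 0), x2, Cadd x3 (e, 0)) : C3).
  assert (HC : cc (fun e => peval P (A e))).
  { apply cc_peval; simpl. apply cc_shift. apply cc_const. apply cc_shift. }
  assert (A0 : A 0 = (x1, x2, x3)). { unfold A. rewrite !Cshift_0. auto. }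
  assert (Hd : exists d, 0 < d /\ forall e, 0 < e < d -> peval P (A e) <> C0).
  { destruct HC as [HC1 HC2].
    destruct (classic (fst (peval P (A 0)) = 0)) as [Z|Z].
    - assert (Z2 : snd (peval P (A 0)) <> 0).
      { intro Z2. apply Hn. rewrite <- A0. apply C_eq; auto. }
      destruct (cont_nz _ HC2 Z2) as [d [Hd H]]. exists d; split; auto.
      intros e He E. apply (H e He). rewrite E. reflexivity.
    - destruct (cont_nz _ HC1 Z) as [d [Hd H]]. exists d; split; auto.
      intros e He E. apply (H e He). rewrite E. reflexivity. }
  destruct Hd as [d [Hd H]].
  assert (Bad : forall (x : C) e, Cadd x (e, 0) = C0 -> e = - fst x).
  { intros [u v] e E. unfold Cadd, C0 in E. simpl in E |- *. injection E; intros. lra. }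
  assert (Try : forall e, 0 < e < d -> (Cadd x1 (e, 0) <> C0 /\ Cadd x3 (e, 0) <> C0) ->
     exists a : C3, peval P a <> C0 /\ fst (fst a) <> C0 /\ snd a <> C0).
  { intros e He [G1 G3]. exists (A e). split. apply H; auto. simpl. auto. }
  destruct (classic (Cadd x1 (d/2, 0) <> C0 /\ Cadd x3 (d/2, 0) <> C0)) as [G|G].
  apply (Try (d/2)); auto; lra.
  destruct (classic (Cadd x1 (d/3, 0) <> C0 /\ Cadd x3 (d/3, 0) <> C0)) as [G'|G'].
  apply (Try (d/3)); auto; lra.
  destruct (classic (Cadd x1 (d/4, 0) <> C0 /\ Cadd x3 (d/4, 0) <> C0)) as [G''|G''].
  apply (Try (d/4)); auto; lra.
  exfalso.
  apply not_and_or in G; apply not_and_or in G'; apply not_and_or in G''.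
  destruct G as [G|G]; apply NNPP, Bad in G;
  destruct G' as [G'|G']; apply NNPP, Bad in G';
  destruct G'' as [G''|G'']; apply NNPP, Bad in G''; lra.
Qed.

Definition Ps0 : list poly3 := [[(C1, (1%nat, 0%nat, 1%nat))]].

Lemma Ps0_open a : in_zopen Ps0 a -> fst (fst a) <> C0 /\ snd a <> C0.
Proof.
  intros [P [HP Hn]]. destruct HP as [HP|[]]. subst P.
  destruct a as [[x1 x2] x3]. unfold peval in Hn; simpl in Hn.
  split; intro E; simpl in E; apply Hn; rewrite E; ring.
Qed.

Theorem main_impl (f g : ps1) (p q : nat) :
  vord f = Fin (INR p) -> (3 <= p)%nat ->
  vord g = Fin (INR q) -> (2 <= q)%nat ->
  ERle (Tq 2 [gen_f f; gen_g g]) (Fin (INR (Nat.max p q))) /\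
  beta2 [gen_f f; gen_g g] = Fin (INR (q * (p - 1))) /\
  Nat.max p (q * (p - 1)) = (q * (p - 1))%nat.
Proof.
  intros Ef Hp Eg Hq. split; [|split].
  - unfold Tq.
    destruct (ER_inf_spec (fun t => exists ws : list C3, length ws = (2 - 1)%nat /\
       t = T1 ([gen_f f; gen_g g] ++ map lin ws)) 0) as [A _].
    { intros s [ws [_ E]]; subst; apply T1_nonneg. }
    eapply ERle_trans. apply A. exists [(C0, C0, C1)]. split; reflexivity.
    simpl. apply T1_le. intros; apply (Tq_upper f g p q); auto. lia.
  - set (N := Fin (INR (q * (p - 1)))).
    assert (Gen : forall a : C3, fst (fst a) <> C0 -> snd a <> C0 -> T1 ([gen_f f; gen_g g] ++ [lin a]) = N).
    { intros [[a1 a2] a3] H1 H3. simpl in H1, H3. simpl. apply ERle_antisym.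
      apply T1_le. intros; apply (beta_upper f g p q); auto.
      apply (beta_lower f g p q); auto. }
    unfold beta2.
    destruct (epsilon_spec (inhabits PInf) (generic_value2 [gen_f f; gen_g g])) as [Ps [_ [[a' [_ [P [HP Hn]]]] HT]]].
    { exists N. exists Ps0. split. repeat constructor. exists 2%nat. repeat constructor.
      split.
      - exists (C1, C0, C1). split. intro E. apply (f_equal (fun a : C3 => fst (fst (fst a)))) in E. unfold C3zero, C1, C0 in E; simpl in E. lra.
        exists [(C1, (1%nat, 0%nat, 1%nat))]. split. left; auto. unfold peval; simpl.
        unfold C1, C0, Cmul, Cadd; simpl. intro E; injection E; intros; lra.
      - intros a _ Ha. destruct (Ps0_open a Ha). apply Gen; auto. }
    destruct (perturb P a' Hn) as [a [Ha [H1 H3]]].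
    rewrite <- (HT a). apply Gen; auto.
    intro E. subst a. apply H1. reflexivity.
    exists P; auto.
  - apply Nat.max_r. nia.
Qed.

Theorem mainTheorem9 (f g : ps1) (p q : nat) :
  conv1 f -> conv1 g ->
  vord f = Fin (INR p) -> (3 <= p)%nat ->
  vord g = Fin (INR q) -> (2 <= q)%nat ->
  ERle (Tq 2 [gen_f f; gen_g g]) (Fin (INR (Nat.max p q))) /\
  beta2 [gen_f f; gen_g g] = Fin (INR (Nat.max p (q * (p - 1)))) /\
  Nat.max p (q * (p - 1)) = (q * (p - 1))%nat.
Proof.
  intros _ _ Ef Hp Eg Hq. destruct (main_impl f g p q Ef Hp Eg Hq) as [A [B E]].
  rewrite E. auto.
Qed.
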